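(* Let $\{(\bm x_j,y_j)\}_{j=1}^N\subseteq\mathbb{R}^P\times\{0,1\}$ and thresholds $0=p_0<p_1<\cdots<p_M<1$. Let $\bm\rho\in\mathbb{R}^P\setminus\{0\}$ and $\bm t=(t_0,\dots,t_M)\in\mathbb{R}^{M+1}$ satisfy $-\max_j|\bm x_j\bm\rho|\le t_0\le t_1\le\cdots\le t_M\le\max_j|\bm x_j\bm\rho|$. Let $\|X\|_\infty=\max_{1\le j\le N}\|\bm x_j\|_1$ and $\gamma_{\min}=\frac{\min_{i,j}|\bm x_j\bm\rho-t_i|}{\|\bm\rho\|_\infty}$ (minimum over $0\le i\le M$, $1\le j\le N$). Let $\Lambda$ and $T_{\max}$ be positive integers. If $\gamma_{\min}>0$, $\Lambda>\frac{\|X\|_\infty+1}{2\gamma_{\min}}$ and $T_{\max}\ge\lceil\Lambda\|X\|_\infty\rceil$, then there exist $\bm\lambda\in\{-\Lambda,\dots,\Lambda\}^P$ and $\bm T\in\{-T_{\max},\dots,T_{\max}\}^{M+1}$ with $\mathrm{WNB}(\bm\lambda,\bm T)\ge\mathrm{WNB}(\bm\rho,\bm t)$.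
   Context: Samples $\bm x_j$ are row vectors, so $\bm x_j\bm\lambda$ is a scalar. Weights $\omega_0,\dots,\omega_M\in[0,1]$ with $\sum_i\omega_i=1$ are fixed. For coefficients $\bm\lambda\in\mathbb{R}^P$ and intercepts $\bm T=(T_0,\dots,T_M)$, the weighted net benefit is $\mathrm{WNB}(\bm\lambda,\bm T)=\sum_{i=0}^M\Big(\omega_i\sum_{j=1}^N I(\bm x_j\bm\lambda\ge T_i,\,y_j=1)-\frac{\omega_ip_i}{1-p_i}\sum_{j=1}^N I(\bm x_j\bm\lambda\ge T_i,\,y_j=0)\Big)$, where $I$ is the indicator function. *)

(* Defs.v *)
From mathcomp Require Import all_boot all_order all_algebra.
Set Implicit Arguments. Unset Strict Implicit. Unset Printing Implicit Defensive.
Import Order.TTheory GRing.Theory Num.Theory.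
Local Open Scope ring_scope.

Definition dotp (R : ringType) (P : nat) (x lam : 'rV[R]_P) : R :=
  \sum_(k < P) x 0 k * lam 0 k.

Definition WNB (R : realFieldType) (N P M : nat)
  (x : 'I_N -> 'rV[R]_P) (y : 'I_N -> bool)
  (w p : 'I_M.+1 -> R) (lam : 'rV[R]_P) (T : 'I_M.+1 -> R) : R :=
  \sum_(i < M.+1)
    (w i * (#|[set j : 'I_N | (T i <= dotp (x j) lam) && y j]|)%:R
     - w i * p i / (1 - p i) *
         (#|[set j : 'I_N | (T i <= dotp (x j) lam) && ~~ y j]|)%:R).

Definition maxabs (R : realFieldType) (N P : nat) (x : 'I_N -> 'rV[R]_P)
  (rho : 'rV[R]_P) : R := \big[Num.max/0]_(j < N) `|dotp (x j) rho|.

Definition Xinf (R : realFieldType) (N P : nat) (x : 'I_N -> 'rV[R]_P) : R :=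
  \big[Num.max/0]_(j < N) \sum_(k < P) `|x j 0 k|.

Definition vinf (R : realFieldType) (P : nat) (v : 'rV[R]_P) : R :=
  \big[Num.max/0]_(k < P) `|v 0 k|.

(* gamma_min = min_{i,j} |x_j rho - t_i| / ||rho||_inf ; here the samples are
   indexed by 'I_n.+1 (N = n+1 >= 1 samples), so the minimum is over a
   nonempty family; the seed is the (i,j) = (0,0) term itself. *)
Definition gamma_min (R : realFieldType) (n P M : nat) (x : 'I_n.+1 -> 'rV[R]_P)
  (rho : 'rV[R]_P) (t : 'I_M.+1 -> R) : R :=
  let m0 := `|dotp (x ord0) rho - t ord0| in
  (\big[Num.min/m0]_(i < M.+1) \big[Num.min/m0]_(j < n.+1) `|dotp (x j) rho - t i|)
  / vinf rho.

(* Main.v *)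
Require Import Defs.
From mathcomp Require Import all_boot all_order all_algebra.
From mathcomp Require Import ring lra zify.
Import Order.TTheory GRing.Theory Num.Theory.
Set Implicit Arguments.
Local Open Scope ring_scope.
Lemma zA {a b : int} : a - 1 < b -> a <= b. Proof. lia. Qed.
Lemma zB {a b : int} : a < b + 1 -> a <= b. Proof. lia. Qed.

Section S.
Variable R : archiRealFieldType.

Lemma vinf_ge (P : nat) (v : 'rV[R]_P) k : `|v 0 k| <= vinf v.
Proof. rewrite /vinf; exact: le_bigmax. Qed.

Lemma vinf_ge0 (P : nat) (v : 'rV[R]_P) : 0 <= vinf v.
Proof. rewrite /vinf; exact: bigmax_ge_id. Qed.

Lemma Xinf_ge (N P : nat) (x : 'I_N -> 'rV[R]_P) j : \sum_(k < P) `|x j 0 k| <= Xinf x.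
Proof. rewrite /Xinf; exact: le_bigmax. Qed.

Lemma maxabs_ge (N P : nat) (x : 'I_N -> 'rV[R]_P) rho j : `|dotp (x j) rho| <= maxabs x rho.
Proof. rewrite /maxabs; exact: le_bigmax. Qed.

Lemma maxabs_le (N P : nat) (x : 'I_N -> 'rV[R]_P) rho :
  maxabs x rho <= Xinf x * vinf rho.
Proof.
rewrite /maxabs; apply: bigmax_le.
  by rewrite mulr_ge0 ?vinf_ge0 // /Xinf bigmax_ge_id.
move=> j _; rewrite /dotp.
apply: le_trans (ler_norm_sum _ _ _) _.
apply: le_trans (_ : \sum_(k < P) `|x j 0 k| * vinf rho <= _).
  apply: ler_sum => k _; rewrite normrM ler_wpM2l ?vinf_ge //.
by rewrite -mulr_suml ler_wpM2r ?vinf_ge0 ?Xinf_ge.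
Qed.

Lemma dotp_diff (P : nat) (xv a b : 'rV[R]_P) :
  (forall k, `|a 0 k - b 0 k| <= 2^-1) ->
  `|dotp xv a - dotp xv b| <= (\sum_(k < P) `|xv 0 k|) / 2.
Proof.
move=> H; rewrite /dotp -sumrB.
apply: le_trans (ler_norm_sum _ _ _) _.
rewrite mulr_suml; apply: ler_sum => k _.
by rewrite -mulrBr normrM ler_wpM2l.
Qed.

Lemma gam_le (n P M : nat) (x : 'I_n.+1 -> 'rV[R]_P) rho (t : 'I_M.+1 -> R) i j :
  gamma_min x rho t * vinf rho <= `|dotp (x j) rho - t i|.
Proof.
rewrite /gamma_min.
have [->|vn] := eqVneq (vinf rho) 0; first by rewrite mulr0.
rewrite divfK //.
apply: le_trans (bigmin_le _ i _) _.
exact: bigmin_le.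
Qed.

Lemma lemA (a b : R) : a <= b -> a - 2^-1 <= b. Proof. lra. Qed.
Lemma lemB (T st LX C Tm : R) : st - 2^-1 <= T -> -LX <= st -> LX <= C -> C <= Tm -> -Tm - 1 < T.
Proof. lra. Qed.
Lemma lemC (l r L : R) : l <= r + 2^-1 -> r <= L -> l < L + 1. Proof. lra. Qed.
Lemma lemD (l r L : R) : r + 2^-1 < l + 1 -> -L <= r -> -L - 1 < l. Proof. lra. Qed.
Lemma lemE (l r : R) : l <= r + 2^-1 -> r + 2^-1 < l + 1 -> -2^-1 <= l - r <= 2^-1.
Proof. move=> *; apply/andP; split; lra. Qed.
Lemma F1 (Tr st sd D X Lg : R) : Tr - 1 < st - 2^-1 -> -(X/2) <= D - sd ->
  Lg <= sd - st -> (X+1)/2 < Lg -> Tr <= D.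
Proof. lra. Qed.
Lemma F2 (Tr st sd D X Lg : R) : st - 2^-1 <= Tr -> D - sd <= X/2 ->
  Lg <= - (sd - st) -> (X+1)/2 < Lg -> D < Tr.
Proof. lra. Qed.
End S.

Theorem theorem3 (R : archiRealFieldType) (n P M : nat)
  (x : 'I_n.+1 -> 'rV[R]_P) (y : 'I_n.+1 -> bool)
  (w p : 'I_M.+1 -> R)
  (hw : forall i, 0 <= w i <= 1) (hwsum : \sum_(i < M.+1) w i = 1)
  (hp0 : p ord0 = 0)
  (hpinc : forall i j : 'I_M.+1, (i < j)%N -> p i < p j)
  (hp1 : forall i, p i < 1)
  (rho : 'rV[R]_P) (hrho : rho != 0)
  (t : 'I_M.+1 -> R)
  (ht0 : - maxabs x rho <= t ord0)
  (htinc : forall i j : 'I_M.+1, (i <= j)%N -> t i <= t j)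
  (htM : t ord_max <= maxabs x rho)
  (Lam Tmax : nat) (hLam : (0 < Lam)%N) (hTmax : (0 < Tmax)%N)
  (hgam : 0 < gamma_min x rho t)
  (hLamb : (Xinf x + 1) / (2 * gamma_min x rho t) < Lam%:R)
  (hTb : Num.ceil (Lam%:R * Xinf x) <= Tmax%:Z) :
  exists (lam : 'I_P -> int) (T : 'I_M.+1 -> int),
    (forall k, `|lam k| <= Lam%:Z) /\ (forall i, `|T i| <= Tmax%:Z) /\
    WNB x y w p (\row_k (lam k)%:~R) (fun i => (T i)%:~R)
      >= WNB x y w p rho t.
Proof.
set g := gamma_min x rho t in hgam hLamb.
set V := vinf rho.
set X := Xinf x.
have V0 : 0 < V.
  rewrite lt_def vinf_ge0 andbT; apply/eqP => V0.
  by move: hgam; rewrite /g /gamma_min -/V V0 invr0 mulr0 ltxx.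
have X0 : 0 <= X by rewrite /X /Xinf bigmax_ge_id.
have Lg : (X + 1) / 2 < Lam%:R * g.
  have g2 : 0 < 2 * g by rewrite mulr_gt0.
  move: hLamb; rewrite ltr_pdivrMr // => h.
  rewrite ltr_pdivrMr //.
  have -> : Lam%:R * g * 2 = Lam%:R * (2 * g) by ring.
  exact: h.
set s := Lam%:R / V.
have s0 : 0 < s by rewrite divr_gt0 // ltr0n.
have sV : s * V = Lam%:R by rewrite /s divfK // gt_eqF.
pose lam k := Num.floor (s * rho 0 k + 2^-1).
pose T i := Num.ceil (s * t i - 2^-1).
have hlam1 k : (lam k)%:~R <= s * rho 0 k + 2^-1 by apply: floor_le.
have hlam2 k : s * rho 0 k + 2^-1 < (lam k + 1)%:~R by apply: floorD1_gt.
have hT1 i : s * t i - 2^-1 <= (T i)%:~R by apply: ceil_ge.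
have hT2 i : (T i - 1)%:~R < s * t i - 2^-1 by apply: ceilB1_lt.
have srho k : `|s * rho 0 k| <= Lam%:R.
  rewrite normrM gtr0_norm // -sV. apply: ler_wpM2l; [exact: ltW | exact: vinf_ge].
exists lam, T; split; [|split].
- move=> k; move: (srho k); rewrite ler_norml => /andP[sr1 sr2].
  have h1 : lam k < Lam%:Z + 1.
    rewrite -(ltr_int R) intrD -pmulrn. exact: lemC (hlam1 k) sr2.
  have h2 : - (Lam%:Z) - 1 < lam k.
    have := hlam2 k; rewrite -(ltr_int R) !intrD intrN -pmulrn. move=> q; exact: lemD q sr1.
  by rewrite ler_norml (zA h2) (zB h1).
- move=> i.
  have ti1 : t ord0 <= t i by apply: htinc.
  have ti2 : t i <= t ord_max by apply: htinc; rewrite -ltnS ltn_ord.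
  have mX := @maxabs_le R _ _ x rho; rewrite -/X -/V in mX.
  have e1 : s * (X * V) = Lam%:R * X by rewrite mulrCA sV mulrC.
  have e2 : s * t i <= s * (X * V) by rewrite ler_pM2l //; exact: le_trans ti2 (le_trans htM mX).
  have e3 : s * - (X * V) <= s * t i.
    rewrite ler_pM2l //; apply: le_trans _ ti1; apply: le_trans _ ht0; by rewrite lerN2.
  rewrite mulrN in e3.
  have c1 := ceil_ge (Lam%:R * X).
  have c2 : (Num.ceil (Lam%:R * X))%:~R <= (Tmax%:Z)%:~R :> R by rewrite ler_int.
  rewrite -pmulrn in c2.
  have h1 : T i <= Tmax%:Z.
    apply: le_trans hTb; apply: le_ceil; rewrite -/X -e1; exact: lemA.
  have h2 : - (Tmax%:Z) - 1 < T i.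
    rewrite -(ltr_int R) !intrD intrN -pmulrn. apply: lemB (hT1 i) _ c1 c2; by rewrite -e1.
  by rewrite ler_norml (zA h2) h1.
- have key : forall i j, ((T i)%:~R <= dotp (x j) (\row_k (lam k)%:~R)) = (t i <= dotp (x j) rho).
    move=> i j.
    set D := dotp (x j) (\row_k (lam k)%:~R).
    set d := dotp (x j) rho.
    have eb : dotp (x j) (\row_k (s * rho 0 k)) = s * d.
      by rewrite /d /dotp mulr_sumr; apply: eq_bigr => k _; rewrite mxE mulrCA.
    have hd := @dotp_diff R P (x j) (\row_k (lam k)%:~R) (\row_k (s * rho 0 k)).
    rewrite eb -/D in hd.
    have hD : `|D - s * d| <= X / 2.
      apply: le_trans (hd _) _.
        move=> k; rewrite !mxE ler_norml.
        have := hlam2 k; rewrite intrD => q. exact: lemE (hlam1 k) q.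
      by rewrite ler_pM2r ?invr_gt0 ?ltr0n //; apply: Xinf_ge.
    move: hD; rewrite ler_norml => /andP[hD1 hD2].
    have hg := @gam_le R _ _ _ x rho t i j; rewrite -/V -/d -/g in hg.
    have hAB : Lam%:R * g <= `|s * d - s * t i|.
      by rewrite -mulrBr normrM gtr0_norm // -sV -mulrA ler_pM2l // mulrC.
    have q2 := hT1 i; have q1 := hT2 i; rewrite intrD intrN /= in q1.
    have [h|h] := leP (t i) d.
    + have h' : s * t i <= s * d by rewrite ler_pM2l.
      rewrite ger0_norm ?subr_ge0 // in hAB.
      exact: F1 q1 hD1 hAB Lg.
    + have h' : s * d < s * t i by rewrite ltr_pM2l.
      rewrite ltr0_norm ?subr_lt0 // in hAB.
      apply/negbTE; rewrite -ltNge. exact: F2 q2 hD2 hAB Lg.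
  rewrite le_eqVlt; apply/orP; left; apply/eqP.
  rewrite /WNB; apply: eq_bigr => i _.
  have E1 : [set j | ((T i)%:~R <= dotp (x j) (\row_k (lam k)%:~R)) && y j]
      = [set j | (t i <= dotp (x j) rho) && y j].
    by apply/setP => j; rewrite !inE key.
  have E2 : [set j | ((T i)%:~R <= dotp (x j) (\row_k (lam k)%:~R)) && ~~ y j]
      = [set j | (t i <= dotp (x j) rho) && ~~ y j].
    by apply/setP => j; rewrite !inE key.
  by rewrite E1 E2.
Qed.
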